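(* Let $c$ be a positive integer and let $\nu$ be the smallest positive integer that does not divide $c$. There exists $N(c)$ such that for every integer $n>N(c)$, $\mathrm{mup}(n+\nu,c)=\mathrm{mup}(n,c)+1$.
   Context: A unique partition of positive integers $A$ and $B$ consists of positive integers $A_1,\dots,A_a$ with $\sum_i A_i=A$ and $B_1,\dots,B_b$ with $\sum_j B_j=B$ such that, viewing these as $a+b$ indexed items, the only subsets of the items whose sum equals $A$ are the set of items $\{A_1,\dots,A_a\}$ and, in case $A=B$, also its complement. $\mathrm{mup}(A,B)$ is the maximum of $a+b$ over all unique partitions of $A$ and $B$ (with $\mathrm{mup}(1,1)=2$). *)

(* Defs.v *)
From Stdlib Require Import ClassicalEpsilon.
From mathcomp Require Import all_boot.
Set Implicit Arguments. Unset Strict Implicit. Unset Printing Implicit Defensive.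

(* Items: the a+b items are the entries of sA ++ sB, indexed by 'I_(size sA + size sB);
   indices < size sA are the A-items, the others the B-items. *)
Definition unique_partition (A B : nat) (sA sB : seq nat) : Prop :=
  [/\ all (fun x => 0 < x) sA, all (fun x => 0 < x) sB,
      sumn sA = A, sumn sB = B &
      forall S : {set 'I_(size sA + size sB)},
        \sum_(i in S) nth 0 (sA ++ sB) i = A ->
        S = [set i : 'I_(size sA + size sB) | i < size sA]
        \/ (A = B /\ S = [set i : 'I_(size sA + size sB) | size sA <= i])].

Definition asb (P : Prop) : bool :=
  if excluded_middle_informative P then true else false.

Definition has_up_of_size (A B k : nat) : Prop :=
  exists sA sB, unique_partition A B sA sB /\ size sA + size sB = k.

(* mup A B = max of a+b over unique partitions; since all parts are positive,
   a + b <= A + B, so the maximum may be taken over k <= A + B. *)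
Definition mup (A B : nat) : nat :=
  \max_(k < (A + B).+1 | asb (has_up_of_size A B k)) k.

(* Main.v *)
From Stdlib Require Import ClassicalEpsilon.
Require Import Defs.
From mathcomp Require Import all_boot zify.

Fixpoint sub (s : seq nat) (x : nat) : bool :=
  if s is v :: s' then sub s' x || ((v <= x) && sub s' (x - v)) else x == 0.

Lemma sum_recl n (X : {set 'I_n.+1}) (F : 'I_n.+1 -> nat) :
  \sum_(i in X) F i = (ord0 \in X) * F ord0 +
     \sum_(j in [set j : 'I_n | lift ord0 j \in X]) F (lift ord0 j).
Proof.
rewrite big_mkcond big_ord_recl [in RHS]big_mkcond; congr (_ + _).
  by case: (ord0 \in X); rewrite ?mul1n ?mul0n.
by apply: eq_bigr => i _; rewrite inE.
Qed.

Lemma ssum_sub s x : sub s x <-> exists X : {set 'I_(size s)}, \sum_(i in X) nth 0 s i = x.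
Proof.
elim: s x => [|v s IH] x /=.
  split; first by move/eqP->; exists set0; rewrite big_set0.
  by case=> X <-; rewrite big_mkcond big_ord0.
split.
  case/orP => [/IH [X HX] | /andP [le /IH [X HX]]].
    pose Z := [set i : 'I_(size s).+1 | if unlift ord0 i is Some j then j \in X else false].
    exists Z; rewrite sum_recl (_ : ord0 \in Z = false); last by rewrite inE unlift_none.
    rewrite mul0n add0n -HX.
    by apply: eq_big => [j|j _]; rewrite // !inE ?liftK.
  pose Z := [set i : 'I_(size s).+1 | if unlift ord0 i is Some j then j \in X else true].
  exists Z; rewrite sum_recl (_ : ord0 \in Z = true); last by rewrite inE unlift_none.
  rewrite mul1n /= -(subnKC le) -HX; congr (_ + _).
  by apply: eq_big => [j|j _]; rewrite // !inE ?liftK.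
case=> X; rewrite sum_recl /= => <-.
set Y := [set j | _ ].
have HY : sub s (\sum_(j in Y) nth 0 s j) by apply/IH; exists Y.
by case: (ord0 \in X); rewrite ?mul0n ?mul1n ?add0n ?HY // leq_addr addKn HY orbT.
Qed.

Definition good n c sA sB := [/\ all (fun x => 0 < x) sA, all (fun x => 0 < x) sB,
  sumn sA = n, sumn sB = c & forall x, 0 < x -> sub sA x -> sub sB x -> False].

Lemma sum_split (sA sB : seq nat) (S : {set 'I_(size sA + size sB)}) :
  \sum_(i in S) nth 0 (sA ++ sB) i =
  \sum_(i in [set j | lshift (size sB) j \in S]) nth 0 sA i +
  \sum_(i in [set j | rshift (size sA) j \in S]) nth 0 sB i.
Proof.
rewrite big_split_ord; congr (_ + _); apply: eq_big => i.
- by rewrite inE.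
- by move=> _; rewrite nth_cat /= ltn_ord.
- by rewrite inE.
- by move=> _; rewrite nth_cat /= ltnNge leq_addr /= addKn.
Qed.

Lemma sumn_ord s : sumn s = \sum_(i < size s) nth 0 s i.
Proof. by rewrite sumnE (big_nth 0) big_mkord. Qed.

Lemma sum_compl s (X : {set 'I_(size s)}) :
  \sum_(i in ~: X) nth 0 s i = sumn s - \sum_(i in X) nth 0 s i.
Proof.
rewrite sumn_ord (bigID (mem X) predT) /= addKn.
by apply: eq_bigl => i; rewrite inE.
Qed.

Lemma sum0_set0 {s} {X : {set 'I_(size s)}} :
  all (fun x => 0 < x) s -> \sum_(i in X) nth 0 s i = 0 -> X = set0.
Proof.
move=> /allP Hp /eqP; rewrite sum_nat_eq0 => /forallP H.
apply/setP => i; rewrite inE; apply/negP => Hi.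
have := H i; rewrite Hi /= => /eqP H0.
by have := Hp _ (mem_nth 0 (ltn_ord i)); rewrite H0.
Qed.

Lemma crit n c sA sB : c < n -> all (fun x => 0 < x) sA -> all (fun x => 0 < x) sB ->
  sumn sA = n -> sumn sB = c ->
  unique_partition n c sA sB <-> good n c sA sB.
Proof.
move=> lt pA pB sAn sBc; split.
  case=> _ _ _ _ H; split => // x x0 /ssum_sub [X HX] /ssum_sub [Y HY].
  pose S := [set i : 'I_(size sA + size sB) |
     match split i with inl k => k \notin X | inr k => k \in Y end].
  have HS : \sum_(i in S) nth 0 (sA ++ sB) i = n.
    rewrite sum_split.
    have -> : [set j | lshift (size sB) j \in S] = ~: X.
      by apply/setP => j; rewrite !inE (unsplitK (inl _ j)).
    have -> : [set j | rshift (size sA) j \in S] = Y.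
      by apply/setP => j; rewrite !inE (unsplitK (inr _ j)).
    rewrite sum_compl HX HY sAn subnK // -HX -sAn sumn_ord.
    by rewrite [X in _ <= X](bigID (mem X) predT) leq_addr.
  case: (H S HS) => [HS1 | [E _]]; last by move: lt; rewrite E ltnn.
  case: (set_0Vmem Y) => [Y0 | [j jY]].
    by move: HY x0; rewrite Y0 big_set0 => <-.
  have : rshift (size sA) j \in S by rewrite inE (unsplitK (inr _ j)).
  by rewrite HS1 inE /= ltnNge leq_addr.
case=> _ _ _ _ H; split => // S HS.
left.
move: HS; rewrite sum_split.
set XA := [set j | _ \in S]; set YB := [set j | _ \in S] => HS.
have HC : \sum_(i in ~: XA) nth 0 sA i = \sum_(i in YB) nth 0 sB i.
  by rewrite sum_compl sAn -HS addKn.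
case: (posnP (\sum_(i in YB) nth 0 sB i)) => [x0 | xp]; last first.
  by exfalso; apply: (H _ xp); apply/ssum_sub; [exists (~: XA) | exists YB].
have Y0 := sum0_set0 pB x0.
have XT : ~: XA = set0 by apply: (sum0_set0 pA); rewrite HC.
apply/setP => i; rewrite inE.
case: (ltnP i (size sA)) => hi.
  have -> : i = lshift (size sB) (Ordinal hi) by apply: val_inj.
  by move/setP: XT => /(_ (Ordinal hi)); rewrite !inE => /negbFE.
have hk : i - size sA < size sB by have := ltn_ord i; lia.
have -> : i = rshift (size sA) (Ordinal hk) by apply: val_inj => /=; lia.
have : Ordinal hk \notin YB by rewrite Y0 inE.
by rewrite inE => /negbTE ->.
Qed.

Lemma sub0 s : sub s 0.
Proof. by elim: s => //= v s ->. Qed.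

Lemma sub_le s x : sub s x -> x <= sumn s.
Proof.
elim: s x => [|v s IH] x /=; first by move/eqP->.
case/orP => [/IH | /andP [le /IH]]; lia.
Qed.

Lemma sub_sumn s : sub s (sumn s).
Proof. by elim: s => //= v s IH; rewrite leq_addr addKn IH orbT. Qed.

Lemma sub_add v s y : sub s y -> y < count_mem v s * v -> sub s (y + v).
Proof.
elim: s y => [|w s IH] y //=.
case/orP => [Hs | /andP [le Hs]].
  case: (eqVneq w v) => [-> | ne].
    by rewrite leq_addl addnK Hs orbT.
  by move=> /(IH _ Hs) ->.
case: (eqVneq w v) => [E | ne]; subst.
  rewrite /= add1n mulSn => lt.
  have H1 : y - v < count_mem v s * v by rewrite ltn_subLR.
  have := IH _ Hs H1; rewrite subnK // => Hy.
  by rewrite leq_addl addnK Hy orbT.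
move=> lt.
have H1 : y - w < count_mem v s * v by exact: leq_ltn_trans (leq_subr w y) lt.
have := IH _ Hs H1 => Hy.
have -> : y + v - w = y - w + v by rewrite [RHS]addnC addnBA // [y + v]addnC.
by rewrite Hy (leq_trans le (leq_addr _ _)) orbT.
Qed.

Lemma sub_mul v s k : k <= count_mem v s -> sub s (k * v).
Proof.
case: (posnP v) => [-> | vp]; first by rewrite muln0 sub0.
elim: k => [|k IH] le; first by rewrite mul0n sub0.
rewrite mulSn addnC; apply: sub_add; first by apply: IH; exact: ltnW.
by rewrite ltn_mul2r vp.
Qed.

Lemma sub_rem v s x : sub (rem v s) x -> sub s x.
Proof.
elim: s x => [|w s IH] x //=.
case: (eqVneq w v) => [-> | ne] /=; first by move=> ->.
by case/orP => [/IH -> // | /andP [le /IH ->]]; rewrite le orbT.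
Qed.

Lemma sumn_rem v s : v \in s -> sumn (rem v s) + v = sumn s.
Proof.
elim: s => [|w s IH] //=; rewrite inE.
case: (eqVneq w v) => [-> | ne] /=; first by rewrite addnC.
move=> /= Hv; rewrite -IH //; lia.
Qed.

Lemma all_rem (p : pred nat) v s : all p s -> all p (rem v s).
Proof.
elim: s => [|w s IH] //= /andP [pw ps].
by case: (eqVneq w v) => _ //=; rewrite pw IH.
Qed.

Lemma sub_nseq q v x : sub (nseq q v) x -> v %| x.
Proof.
elim: q x => [|q IH] x /=; first by move/eqP->.
case/orP => [/IH // | /andP [le /IH H]].
by rewrite -(subnK le) dvdn_add.
Qed.

Lemma count_le_S m s :
  count (fun x => x <= m.+1) s = count (fun x => x <= m) s + count_mem m.+1 s.
Proof.
elim: s => [|x s IH] //=; rewrite IH.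
case: (ltngtP x m.+1) => h /=; lia.
Qed.

Lemma count_gt m s : m.+1 * count (fun x => m < x) s <= sumn s.
Proof. elim: s => [|x s IH] /=; first by rewrite muln0. case: (ltnP m x) => h /=; lia. Qed.

Lemma size_le_sumn s : all (fun x => 0 < x) s -> size s <= sumn s.
Proof. elim: s => [|x s IH] //= /andP [h /IH]; lia. Qed.

Lemma count0 s : all (fun x => 0 < x) s -> count_mem 0 s = 0.
Proof. elim: s => [|x s IH] //= /andP [h /IH ->]; case: x h => //. Qed.

Lemma few_bound nu n c sA sB : 0 < c -> good n c sA sB ->
  (forall k, 0 < k < nu -> k %| c) -> count_mem nu sA <= c ->
  nu.+1 * (size sA + size sB) <= nu.+1 * (nu.+1 * c + c) + n.
Proof.
move=> c0 [pA pB sAn sBc H] Hdiv Hnu.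
have Hp : forall p, p <= nu -> count_mem p sA <= c.
  move=> p le; case: (posnP p) => [-> | p0]; first by rewrite count0.
  case: (ltngtP p nu) => hp; last 2 first.
  - by lia.
  - by subst.
  rewrite leqNgt; apply/negP => lt.
  have dp : p %| c by apply: Hdiv; rewrite p0 hp.
  apply: (H c c0); last by rewrite -sBc sub_sumn.
  rewrite -(divnK dp); apply: sub_mul.
  apply: leq_trans (ltnW lt); exact: leq_div.
have Hc : forall m, m <= nu -> count (fun x => x <= m) sA <= m.+1 * c.
  elim=> [|m IH] le.
    by rewrite (eq_count (a2 := pred1 0)) ?mul1n ?Hp // => x /=; rewrite leqn0.
  rewrite count_le_S mulSn addnC; apply: leq_add; first exact: Hp.
  by apply: IH; lia.
have := Hc nu (leqnn _).
have := count_gt nu sA.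
have := count_predC (fun x => x <= nu) sA.
rewrite (eq_count (a1 := predC _) (a2 := fun x => nu < x)); last by move=> x /=; rewrite ltnNge.
have := size_le_sumn _ pB.
rewrite sAn sBc.
nia.
Qed.

Lemma asbP (P : Prop) : asb P = true <-> P.
Proof. by rewrite /asb; case: excluded_middle_informative. Qed.

Lemma up_size A B sA sB : unique_partition A B sA sB -> size sA + size sB <= A + B.
Proof.
case=> pA pB <- <- _; apply: leq_add; exact: size_le_sumn.
Qed.

Lemma mup_ge A B k : has_up_of_size A B k -> k <= mup A B.
Proof.
move=> H; have hk : k < (A + B).+1.
  by case: H => sA [sB [U <-]]; rewrite ltnS; exact: up_size U.
rewrite /mup; apply: (leq_bigmax_cond (Ordinal hk) (F := fun i : 'I_(A+B).+1 => val i)).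
by apply/asbP.
Qed.

Lemma mup_att A B k : has_up_of_size A B k -> has_up_of_size A B (mup A B).
Proof.
move=> H; have hk : k < (A + B).+1.
  by case: H => sA [sB [U <-]]; rewrite ltnS; exact: up_size U.
have P0 : asb (has_up_of_size A B (Ordinal hk)) by apply/asbP.
rewrite /mup (bigmax_eq_arg _ P0).
by case: arg_maxnP => // i /asbP.
Qed.

Lemma lower n c nu : 0 < c -> c < n -> 0 < nu -> ~~ (nu %| c) ->
  has_up_of_size n c ((n - c - 1) %/ nu + 2).
Proof.
move=> c0 cn nu0 nd.
set q := (n - c - 1) %/ nu.
have hq : q * nu <= n - c - 1 by exact: leq_divM.
clearbody q.
set L := n - q * nu.
have hL : c < L by rewrite /L; lia.
exists (L :: nseq q nu), [:: c]; split; last by rewrite /= size_nseq; lia.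
have pA : all (fun x => 0 < x) (L :: nseq q nu).
  by rewrite /= all_nseq nu0 orbT andbT; lia.
have sA : sumn (L :: nseq q nu) = n by rewrite /= sumn_nseq mulnC /L; clear -hq; lia.
have pB : all (fun x => 0 < x) [:: c] by rewrite /= c0.
have sB : sumn [:: c] = c by rewrite /= addn0.
apply/(crit _ _ _ _ cn pA pB sA sB); split => //.
move=> x x0 hA; move=> /= /orP [/eqP x0' | /andP [le /eqP e]]; first by lia.
have xc : x = c by lia.
subst x.
case/orP: hA => [/sub_nseq d | /andP [le' _]]; first by rewrite d in nd.
by lia.
Qed.

Lemma good_add n c nu sA sB : 0 < nu -> good n c sA sB ->
  c <= count_mem nu sA * nu -> good (n + nu) c (nu :: sA) sB.
Proof.
move=> nu0 [pA pB sAn sBc H] hc; split => //=.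
- by rewrite nu0 pA.
- by rewrite sAn addnC.
move=> x x0 /orP [hA | /andP [le hA]] hB; first exact: (H x).
apply: (H x x0 _ hB).
have xc : x <= c by rewrite -sBc; exact: sub_le.
have lt : x - nu < count_mem nu sA * nu by lia.
by have := sub_add _ _ _ hA lt; rewrite subnK.
Qed.

Theorem proposition3p3 (c nu : nat) :
  0 < c ->
  0 < nu -> ~~ (nu %| c) -> (forall k, 0 < k < nu -> k %| c) ->
  exists N : nat, forall n : nat, N < n -> mup (n + nu) c = mup n c + 1.
Proof.
move=> c0 nu0 nd Hdiv.
set D := nu.+1 * (nu.+1 * c + c).
have many : forall m, nu * D + nu.+1 * c + c < m ->
    exists sA sB, [/\ good m c sA sB, size sA + size sB = mup m c & c < count_mem nu sA].
  move=> m hm.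
  have cm : c < m by lia.
  have Hl := lower _ _ _ c0 cm nu0 nd.
  have M1 := mup_ge _ _ _ Hl.
  have [sA [sB [U Hs]]] := mup_att _ _ _ Hl.
  have G : good m c sA sB.
    by case: (U) => pA pB sAn sBc _; apply/(crit _ _ _ _ cm pA pB sAn sBc).
  exists sA, sB; split => //.
  rewrite ltnNge; apply/negP => le.
  have := few_bound _ _ _ _ _ c0 G Hdiv le.
  rewrite Hs => hb.
  set S := mup m c in M1 hb Hs.
  set q := (m - c - 1) %/ nu in M1.
  have Hq : m - c - 1 < q.+1 * nu by exact: ltn_ceil.
  have h1 : m - c <= nu * S.
    apply: leq_trans (leq_mul (leqnn nu) M1).
    rewrite mulnDr mulSn in Hq *; rewrite [nu * q]mulnC; lia.
  have h2 : nu.+1 * (m - c) <= nu * (D + m).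
    apply: leq_trans (leq_mul (leqnn _) h1) _.
    rewrite mulnCA; exact: leq_mul.
  move: h2 hm; rewrite mulnBr mulnDr !mulSn; lia.
exists (nu * D + nu.+1 * c + c) => n Hn.
have [sA [sB [G Hs Hc]]] := many n Hn.
have [sA' [sB' [G' Hs' Hc']]] := many (n + nu) (ltn_addr _ Hn).
have up1 : mup n c + 1 <= mup (n + nu) c.
  have G2 := good_add _ _ _ _ _ nu0 G (leq_trans (ltnW Hc) (leq_pmulr _ nu0)).
  apply: mup_ge; exists (nu :: sA), sB; split; last by rewrite /= -Hs; lia.
  case: (G2) => pA pB sAn sBc _; apply/(crit _ _ _ _ _ pA pB sAn sBc) => //; lia.
have inA : nu \in sA' by rewrite -has_pred1 has_count; lia.
have up2 : mup (n + nu) c <= mup n c + 1.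
  case: G' => pA pB sAn sBc H.
  have sr := sumn_rem _ _ inA; rewrite sAn in sr.
  have G3 : good n c (rem nu sA') sB'.
    split => //; first exact: all_rem.
      by apply/eqP; rewrite -(eqn_add2r nu) sr.
    by move=> x x0 /sub_rem; apply: H.
  have : size (rem nu sA') + size sB' <= mup n c.
    apply: mup_ge; exists (rem nu sA'), sB'; split => //.
    case: (G3) => pA3 pB3 sAn3 sBc3 _; apply/(crit _ _ _ _ _ pA3 pB3 sAn3 sBc3) => //; lia.
  rewrite size_rem // -Hs'.
  have : 0 < size sA' by case: (sA') inA.
  case: (size sA') => [|k] // _ /=; lia.
lia.
Qed.
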